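(* Let $p\in(0,1)$ be fixed, $q=1-p$, and let $r>0$ be real. For every integer $m\ge 1$, $$f_r(n)=\frac{np}{(np+q)^{r+1}}\left\{\sum_{k=0}^{m-1}(-1)^k\frac{\mu_k(n-1)}{(np+q)^k}\binom{r+k}{r}+O\!\left(n^{-\lceil m/2\rceil}\right)\right\}\quad\text{as } n\to\infty.$$ Moreover, for each fixed $k$, $\mu_k(n-1)/(np+q)^k=O\!\left(n^{-\lceil k/2\rceil}\right)$ as $n\to\infty$.
   Context: For a positive integer $n$, $p\in(0,1)$, $q=1-p$ and real $r>0$, define $f_r(n)=\sum_{i=1}^n\binom{n}{i}p^iq^{n-i}\,i^{-r}$ (this equals $(1-q^n)\,\mathbb{E}(1/X^r)$ for $X$ a binomial$(n,p)$ variable conditioned to be positive). For integers $N\ge 0$ and $k\ge 0$, $\mu_k(N)=\sum_{i=0}^N\binom{N}{i}p^iq^{N-i}(i-Np)^k$ is the $k$-th central moment of the binomial$(N,p)$ distribution (the sum includes $i=0$). For non-integer $r$, $\binom{r+k}{r}:=(r+1)(r+2)\cdots(r+k)/k!$ (and $=1$ for $k=0$). $\lceil x\rceil$ denotes the ceiling of $x$. *)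

(* Defs.v *)
From Stdlib Require Import Arith Reals Lra Lia List.
Open Scope R_scope.

Definition rsum (a len : nat) (F : nat -> R) : R :=
  fold_right Rplus 0 (map F (seq a len)).

Definition f_r (p r : R) (n : nat) : R :=
  rsum 1 n (fun i => C n i * p ^ i * (1 - p) ^ (n - i) / Rpower (INR i) r).

(* k-th central moment of binomial(N,p): sum_{i=0}^N C(N,i) p^i q^(N-i) (i - Np)^k *)
Definition mu (p : R) (k N : nat) : R :=
  rsum 0 (S N) (fun i => C N i * p ^ i * (1 - p) ^ (N - i) * (INR i - INR N * p) ^ k).

(* generalized binomial binom(r+k, r) = (r+1)(r+2)...(r+k)/k!  (= 1 for k = 0) *)
Definition gbinom (r : R) (k : nat) : R :=
  fold_right Rmult 1 (map (fun j => r + INR j) (seq 1 k)) / INR (Factorial.fact k).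

(* ceiling of a real: ceil x = -floor(-x) = 1 - up(-x), since up y is the
   unique integer with y < up y <= y + 1 *)
Definition Rceil (x : R) : Z := (1 - up (- x))%Z.

(* Main.v *)
Require Import Defs.
From Stdlib Require Import Reals Lra Lia List.
Open Scope R_scope.

Lemma rsum_0 a F : rsum a 0 F = 0.
Proof. reflexivity. Qed.
Lemma rsum_S a n F : rsum a (S n) F = F a + rsum (S a) n F.
Proof. reflexivity. Qed.
Lemma rsum_last a n F : rsum a (S n) F = rsum a n F + F (a + n)%nat.
Proof.
  revert a; induction n; intros a.
  - unfold rsum; simpl. rewrite Nat.add_0_r; ring.
  - rewrite rsum_S, IHn, rsum_S. replace (S a + n)%nat with (a + S n)%nat by lia. ring.
Qed.
Lemma rsum_shift a n F : rsum (S a) n F = rsum a n (fun i => F (S i)).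
Proof.
  revert a; induction n; intros a; [reflexivity|].
  rewrite !rsum_S, IHn. reflexivity.
Qed.
Lemma rsum_ext a n F G : (forall i, (a <= i < a + n)%nat -> F i = G i) -> rsum a n F = rsum a n G.
Proof.
  revert a; induction n; intros a H; [reflexivity|].
  rewrite !rsum_S. rewrite H by lia. rewrite (IHn (S a)); [reflexivity|].
  intros; apply H; lia.
Qed.
Lemma rsum_plus a n F G : rsum a n (fun i => F i + G i) = rsum a n F + rsum a n G.
Proof.
  revert a; induction n; intros a; [unfold rsum; simpl; ring|].
  rewrite !rsum_S, IHn; ring.
Qed.
Lemma rsum_scal a n c F : rsum a n (fun i => c * F i) = c * rsum a n F.
Proof.
  revert a; induction n; intros a; [unfold rsum; simpl; ring|].
  rewrite !rsum_S, IHn; ring.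
Qed.
Lemma rsum_le a n F G : (forall i, (a <= i < a + n)%nat -> F i <= G i) -> rsum a n F <= rsum a n G.
Proof.
  revert a; induction n; intros a H; [unfold rsum; simpl; lra|].
  rewrite !rsum_S. apply Rplus_le_compat; [apply H; lia|].
  apply IHn; intros; apply H; lia.
Qed.
Lemma rsum_abs a n F : Rabs (rsum a n F) <= rsum a n (fun i => Rabs (F i)).
Proof.
  revert a; induction n; intros a; [unfold rsum; simpl; rewrite Rabs_R0; lra|].
  rewrite !rsum_S. eapply Rle_trans; [apply Rabs_triang|].
  apply Rplus_le_compat; [lra|apply IHn].
Qed.
Lemma rsum_nonneg a n F : (forall i, 0 <= F i) -> 0 <= rsum a n F.
Proof.
  revert a; induction n; intros a H; [unfold rsum; simpl; lra|].
  rewrite rsum_S. specialize (IHn (S a) H). specialize (H a). lra.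
Qed.
Lemma rsum_swap a n b m (G : nat -> nat -> R) :
  rsum a n (fun i => rsum b m (fun j => G i j)) = rsum b m (fun j => rsum a n (fun i => G i j)).
Proof.
  revert a; induction n; intros a.
  - unfold rsum at 1; simpl. symmetry. 
    transitivity (rsum b m (fun _ => 0 * 0)).
    + apply rsum_ext; intros; unfold rsum; simpl; ring.
    + rewrite rsum_scal; ring.
  - rewrite rsum_S, IHn. rewrite <- rsum_plus. apply rsum_ext; intros; rewrite rsum_S; ring.
Qed.
Lemma sum_f_R0_rsum f k : sum_f_R0 f k = rsum 0 (S k) f.
Proof.
  induction k; [unfold rsum; simpl; ring|].
  rewrite rsum_last. simpl sum_f_R0. rewrite IHk. reflexivity.
Qed.

Definition w (p : R) (N i : nat) : R := C N i * p ^ i * (1 - p) ^ (N - i).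
Definition E (p : R) (N : nat) (F : nat -> R) : R := rsum 0 (S N) (fun i => w p N i * F i).

Lemma mu_E p k N : mu p k N = E p N (fun i => (INR i - INR N * p) ^ k).
Proof. reflexivity. Qed.

Lemma C_n0 n : C n 0 = 1.
Proof. unfold C; simpl. rewrite Nat.sub_0_r. field. apply INR_fact_neq_0. Qed.
Lemma C_nn n : C n n = 1.
Proof. unfold C; rewrite Nat.sub_diag; simpl. field. apply INR_fact_neq_0. Qed.
Lemma C_nonneg n i : 0 <= C n i.
Proof.
  unfold C. apply Rle_mult_inv_pos; [apply pos_INR|].
  apply Rmult_lt_0_compat; apply INR_fact_lt_0.
Qed.

Section P.
Variable p : R.
Hypothesis hp0 : 0 < p.
Hypothesis hp1 : p < 1.

Lemma w_nonneg N i : 0 <= w p N i.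
Proof.
  unfold w. apply Rmult_le_pos; [apply Rmult_le_pos|]; [apply C_nonneg| |]; apply pow_le; lra.
Qed.

Lemma E_le N F G : (forall i, F i <= G i) -> E p N F <= E p N G.
Proof.
  intros H; unfold E; apply rsum_le; intros; apply Rmult_le_compat_l; [apply w_nonneg|apply H].
Qed.
Lemma E_abs N F : Rabs (E p N F) <= E p N (fun i => Rabs (F i)).
Proof.
  unfold E. eapply Rle_trans; [apply rsum_abs|]. apply rsum_le; intros.
  rewrite Rabs_mult, (Rabs_right (w p N i)); [lra|]. apply Rle_ge, w_nonneg.
Qed.
Lemma E_plus N F G : E p N (fun i => F i + G i) = E p N F + E p N G.
Proof. unfold E. rewrite <- rsum_plus. apply rsum_ext; intros; ring. Qed.
Lemma E_scal N c F : E p N (fun i => c * F i) = c * E p N F.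
Proof. unfold E. rewrite <- rsum_scal. apply rsum_ext; intros; ring. Qed.
Lemma E_ext N F G : (forall i, F i = G i) -> E p N F = E p N G.
Proof. intros H; unfold E; apply rsum_ext; intros; rewrite H; ring. Qed.
Lemma E_rsum N a n G : E p N (fun i => rsum a n (G i)) = rsum a n (fun j => E p N (fun i => G i j)).
Proof.
  unfold E. rewrite <- rsum_swap. apply rsum_ext; intros. rewrite <- rsum_scal. reflexivity.
Qed.

Lemma E_pascal N F : E p (S N) F = (1 - p) * E p N F + p * E p N (fun i => F (S i)).
Proof.
  unfold E. rewrite rsum_S, rsum_shift, rsum_last.
  rewrite (rsum_S 0 N (fun i => w p N i * F i)), rsum_shift.
  rewrite (rsum_last 0 N (fun i => w p N i * F (S i))).
  rewrite (rsum_ext 0 N (fun i => w p (S N) (S i) * F (S i))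
            (fun i => p * (w p N i * F (S i)) + (1 - p) * (w p N (S i) * F (S i)))).
  2:{ intros i Hi. unfold w. rewrite <- pascal by lia.
      replace (S N - S i)%nat with (S (N - S i)) by lia.
      replace (N - i)%nat with (S (N - S i)) by lia. simpl. ring. }
  rewrite rsum_plus, !rsum_scal.
  unfold w. rewrite !C_n0, !Nat.add_0_l, !C_nn, !Nat.sub_diag, !Nat.sub_0_r. simpl. ring.
Qed.

Definition cc (t : nat) : R := (1 - p) * (- p) ^ t + p * (1 - p) ^ t.

Lemma mu_rec k N : mu p k (S N) = rsum 0 (S k) (fun j => C k j * cc (k - j) * mu p j N).
Proof.
  rewrite mu_E, E_pascal.
  rewrite (E_ext N _ (fun i => rsum 0 (S k) (fun j => C k j * (INR i - INR N * p) ^ j * (- p) ^ (k - j)))).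
  2:{ intros i. rewrite <- sum_f_R0_rsum, <- binomial. rewrite ?S_INR; f_equal; ring. }
  rewrite (E_ext N (fun i => (INR (S i) - INR (S N) * p) ^ k) (fun i => rsum 0 (S k) (fun j => C k j * (INR i - INR N * p) ^ j * (1 - p) ^ (k - j)))).
  2:{ intros i. rewrite <- sum_f_R0_rsum, <- binomial. rewrite ?S_INR; f_equal; ring. }
  rewrite !E_rsum, <- !rsum_scal, <- rsum_plus. apply rsum_ext; intros j _.
  rewrite (E_ext N _ (fun i => (C k j * (-p)^(k-j)) * (INR i - INR N * p) ^ j)) by (intros; ring).
  rewrite (E_ext N (fun i => C k j * (INR i - INR N * p) ^ j * (1 - p) ^ (k - j))
     (fun i => (C k j * (1-p)^(k-j)) * (INR i - INR N * p) ^ j)) by (intros; ring).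
  rewrite !E_scal, <- !mu_E. unfold cc. ring.
Qed.
End P.

Section Q.
Variable p : R.
Hypothesis hp0 : 0 < p.
Hypothesis hp1 : p < 1.

Lemma pow_le1 x t : Rabs x <= 1 -> Rabs (x ^ t) <= 1.
Proof.
  intros H. rewrite <- RPow_abs. rewrite <- (pow1 t). apply pow_incr. split; [apply Rabs_pos|lra].
Qed.

Lemma cc_bound t : Rabs (cc p t) <= 1.
Proof.
  unfold cc. eapply Rle_trans; [apply Rabs_triang|]. rewrite !Rabs_mult.
  rewrite (Rabs_right (1-p)) by lra. rewrite (Rabs_right p) by lra.
  assert (H1 := pow_le1 (-p) t). assert (H2 := pow_le1 (1-p) t).
  rewrite Rabs_Ropp, Rabs_right in H1 by lra. rewrite Rabs_right in H2 by lra.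
  specialize (H1 ltac:(lra)). specialize (H2 ltac:(lra)).
  assert (0 <= Rabs ((-p)^t)) by apply Rabs_pos. assert (0 <= Rabs ((1-p)^t)) by apply Rabs_pos.
  nra.
Qed.

Lemma mu_diff k N : mu p k (S N) - mu p k N = rsum 0 (k - 1) (fun j => C k j * cc p (k - j) * mu p j N).
Proof.
  rewrite mu_rec by assumption. destruct k as [|k].
  - unfold rsum; simpl. rewrite C_n0. unfold cc; simpl. ring.
  - rewrite rsum_last, rsum_last. simpl (0 + _)%nat. rewrite C_nn, Nat.sub_diag.
    replace (S k - k)%nat with 1%nat by lia. replace (S k - 1)%nat with k by lia.
    unfold cc; simpl. ring.
Qed.

Lemma mu_step k K : 0 <= K -> (forall j N, (j < k)%nat -> Rabs (mu p j N) <= K * INR (S N) ^ (j / 2)) ->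
  exists K', 0 <= K' /\ forall N, Rabs (mu p k N) <= K' * INR (S N) ^ (k / 2).
Proof.
  intros HK IH.
  set (B := K * rsum 0 (k - 1) (fun j => C k j)).
  assert (HB : 0 <= B) by (apply Rmult_le_pos; [lra| apply rsum_nonneg; intros; apply C_nonneg]).
  assert (Hd : forall N, Rabs (mu p k (S N) - mu p k N) <= B * INR (S N) ^ ((k - 2) / 2)).
  { intros N. rewrite mu_diff. eapply Rle_trans; [apply rsum_abs|].
    unfold B. rewrite Rmult_assoc, (Rmult_comm (rsum _ _ _)), <- Rmult_assoc, <- rsum_scal.
    apply rsum_le. intros j Hj. rewrite !Rabs_mult. rewrite (Rabs_right (C k j)) by (apply Rle_ge, C_nonneg).
    assert (H1 := cc_bound (k - j)). assert (H2 := IH j N ltac:(lia)).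
    assert (H3 : INR (S N) ^ (j / 2) <= INR (S N) ^ ((k - 2) / 2)).
    { apply Rle_pow. rewrite S_INR; assert (0 <= INR N) by apply pos_INR; lra.
      apply Nat.Div0.div_le_mono; lia. }
    assert (0 <= C k j) by apply C_nonneg. assert (0 <= Rabs (cc p (k - j))) by apply Rabs_pos.
    assert (0 <= Rabs (mu p j N)) by apply Rabs_pos.
    assert (0 <= INR (S N) ^ (j / 2)) by (apply pow_le, pos_INR).
    assert (H6 : Rabs (cc p (k - j)) * Rabs (mu p j N) <= K * INR (S N) ^ ((k - 2) / 2)).
    { rewrite <- (Rmult_1_l (K * _)). apply Rmult_le_compat; try lra.
      eapply Rle_trans; [apply H2|]. apply Rmult_le_compat_l; lra. }
    rewrite Rmult_assoc, (Rmult_comm (K * _)). apply Rmult_le_compat_l; lra. }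
  assert (Hs : forall N, Rabs (mu p k N) <= Rabs (mu p k 0) + B * INR N * INR (S N) ^ ((k - 2) / 2)).
  { induction N.
    - simpl INR. lra.
    - specialize (Hd N).
      assert (Rabs (mu p k (S N)) <= Rabs (mu p k N) + Rabs (mu p k (S N) - mu p k N)).
      { replace (mu p k (S N)) with (mu p k N + (mu p k (S N) - mu p k N)) at 1 by ring. apply Rabs_triang. }
      assert (H4 : INR (S N) ^ ((k - 2) / 2) <= INR (S (S N)) ^ ((k - 2) / 2)).
      { apply pow_incr. split; [apply pos_INR|]. apply le_INR; lia. }
      assert (0 <= INR N) by apply pos_INR.
      set (X := INR (S N) ^ _) in *. set (Y := INR (S (S N)) ^ _) in *.
      assert (0 <= X) by (unfold X; apply pow_le, pos_INR). rewrite S_INR.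
      assert (0 <= B * (INR N + 1) * (Y - X)) by (apply Rmult_le_pos; [apply Rmult_le_pos|]; lra).
      lra. }
  exists (Rabs (mu p k 0) + B). split; [assert (0 <= Rabs (mu p k 0)) by apply Rabs_pos; lra|].
  intros N. eapply Rle_trans; [apply Hs|].
  assert (HP : 1 <= INR (S N) ^ (k / 2)) by (apply pow_R1_Rle; rewrite S_INR; assert (0 <= INR N) by apply pos_INR; lra).
  assert (0 <= Rabs (mu p k 0)) by apply Rabs_pos.
  rewrite Rmult_plus_distr_r. apply Rplus_le_compat; [nra|].
  destruct (Nat.lt_ge_cases k 2) as [Hk|Hk].
  - unfold B. replace (k - 1)%nat with 0%nat by lia. unfold rsum; simpl. lra.
  - assert (Hk2 : k = (1*2 + (k-2))%nat) by lia.
    assert (E2 : (k/2 = S ((k-2)/2))%nat) by (rewrite Hk2 at 1; rewrite Nat.div_add_l by lia; reflexivity).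
    rewrite E2.
    rewrite <- tech_pow_Rmult. rewrite Rmult_assoc. apply Rmult_le_compat_l; [lra|].
    apply Rmult_le_compat_r; [apply pow_le, pos_INR|]. apply le_INR; lia.
Qed.

Lemma mu_bound k : exists K, 0 <= K /\ forall j N, (j <= k)%nat -> Rabs (mu p j N) <= K * INR (S N) ^ (j / 2).
Proof.
  induction k.
  - destruct (mu_step 0 0 ltac:(lra) ltac:(intros; lia)) as [K [HK H]].
    exists K; split; auto. intros j N Hj. replace j with 0%nat by lia. apply H.
  - destruct IHk as [K [HK H]].
    destruct (mu_step (S k) K HK ltac:(intros; apply H; lia)) as [K' [HK' H']].
    exists (Rmax K K'). split; [eapply Rle_trans; [apply HK|apply Rmax_l]|].
    intros j N Hj. assert (0 <= INR (S N) ^ (j / 2)) by (apply pow_le, pos_INR).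
    destruct (Nat.eq_dec j (S k)) as [->|Hne].
    + eapply Rle_trans; [apply H'|]. apply Rmult_le_compat_r; [auto|apply Rmax_r].
    + eapply Rle_trans; [apply H; lia|]. apply Rmult_le_compat_r; [auto|apply Rmax_l].
Qed.
End Q.

Lemma half_double c : ((2 * c) / 2 = c)%nat.
Proof. rewrite Nat.mul_comm. apply Nat.div_mul. lia. Qed.
Lemma half_double1 c : ((2 * c + 1) / 2 = c)%nat.
Proof. rewrite Nat.mul_comm. rewrite Nat.div_add_l by lia. simpl. lia. Qed.
Lemma half_split k : k = (k / 2 + (k + 1) / 2)%nat.
Proof.
  destruct (Nat.Even_or_Odd k) as [[c ->]|[c ->]].
  - replace (2 * c + 1)%nat with (2*c+1)%nat by lia. rewrite half_double, half_double1. lia.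
  - replace (2 * c + 1 + 1)%nat with (2*(c+1))%nat by lia. rewrite half_double, half_double1. lia.
Qed.

Section R1.
Variable p : R.
Hypothesis hp0 : 0 < p.
Hypothesis hp1 : p < 1.

Lemma a_ge N : p * INR (S N) <= INR N * p + 1.
Proof. rewrite S_INR. nra. Qed.
Lemma a_pos N : 0 < INR N * p + 1.
Proof. assert (0 <= INR N) by apply pos_INR. nra. Qed.

Lemma mu_ratio k : exists Cst, 0 <= Cst /\ forall N,
  Rabs (mu p k N / (INR N * p + 1) ^ k) <= Cst / INR (S N) ^ ((k + 1) / 2).
Proof.
  destruct (mu_bound p hp0 hp1 k) as [K [HK H]].
  exists (K / p ^ k). split; [apply Rle_mult_inv_pos; [lra|apply pow_lt; lra]|].
  intros N. specialize (H k N (le_n k)).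
  assert (Hn : 0 < INR (S N)) by (apply lt_0_INR; lia).
  assert (Ha := a_ge N). assert (Hap := a_pos N).
  unfold Rdiv. rewrite Rabs_mult, Rabs_inv, (Rabs_right (_ ^ k)) by (apply Rle_ge, pow_le; lra).
  apply Rle_trans with (K * INR (S N) ^ (k / 2) * / (p * INR (S N)) ^ k).
  - apply Rmult_le_compat; auto using Rabs_pos.
    + left; apply Rinv_0_lt_compat, pow_lt; lra.
    + apply Rinv_le_contravar; [apply pow_lt; nra|]. apply pow_incr; split; [nra|lra].
  - rewrite Rpow_mult_distr. replace (INR (S N) ^ k) with (INR (S N) ^ (k/2) * INR (S N) ^ ((k+1)/2)) by (rewrite <- pow_add, <- half_split; reflexivity).
    assert (0 < INR (S N) ^ (k/2)) by (apply pow_lt; lra).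
    assert (0 < INR (S N) ^ ((k+1)/2)) by (apply pow_lt; lra).
    assert (0 < p ^ k) by (apply pow_lt; lra).
    right. field. repeat split; lra.
Qed.
End R1.

Fixpoint P (s : R) (k : nat) : R := match k with O => 1 | S k => s * P (s + 1) k end.
Definition b (s : R) (k : nat) : R := (-1) ^ k * P s k / INR (Factorial.fact k).
Fixpoint T (s : R) (M : nat) (x : R) : R :=
  match M with O => 0 | S M => T s M x + b s M * x ^ M end.
Definition h (s x : R) : R := Rpower (1 + x) (- s).

Lemma h_deriv s x : -1 < x -> derivable_pt_lim (h s) x (- s * h (s + 1) x).
Proof.
  intros Hx.
  assert (H1 : derivable_pt_lim (fun y => 1 + y) x 1).
  { assert (H := derivable_pt_lim_plus (fct_cte 1) id x 0 1 (derivable_pt_lim_const 1 x) (derivable_pt_lim_id x)).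
    rewrite Rplus_0_l in H. exact H. }
  assert (H2 := derivable_pt_lim_power (1 + x) (- s) ltac:(lra)).
  assert (H3 := derivable_pt_lim_comp _ _ _ _ _ H1 H2).
  unfold h. replace (- s * Rpower (1 + x) (- (s + 1))) with (- s * Rpower (1 + x) (- s - 1) * 1).
  - exact H3.
  - replace (- s - 1) with (- (s + 1)) by ring. ring.
Qed.

Lemma b_S s M : b s (S M) * INR (S M) = - s * b (s + 1) M.
Proof.
  unfold b. simpl P. rewrite fact_simpl, mult_INR. simpl pow.
  assert (INR (S M) <> 0) by (apply not_0_INR; lia). assert (H2 := INR_fact_neq_0 M).
  field. split; auto.
Qed.

Lemma T_deriv s M x : derivable_pt_lim (T s (S M)) x (- s * T (s + 1) M x).
Proof.
  induction M.
  - simpl. replace (- s * 0) with 0 by ring.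
    change (derivable_pt_lim (fun y => 0 + b s 0 * 1) x 0). 
    apply (derivable_pt_lim_const (0 + b s 0 * 1)).
  - change (derivable_pt_lim (fun y => T s (S M) y + b s (S M) * y ^ (S M)) x (- s * (T (s+1) M x + b (s+1) M * x ^ M))).
    replace (- s * (T (s+1) M x + b (s+1) M * x ^ M)) with
      (- s * T (s+1) M x + b s (S M) * (INR (S M) * x ^ pred (S M))).
    2:{ simpl pred. rewrite <- Rmult_assoc, b_S. ring. }
    apply (derivable_pt_lim_plus (T s (S M)) (fun y => b s (S M) * y ^ (S M))); [exact IHM|].
    apply (derivable_pt_lim_scal (fun y => y ^ (S M))). apply derivable_pt_lim_pow.
Qed.

Lemma T0 s M : T s (S M) 0 = 1.
Proof.
  induction M.
  - simpl. unfold b. simpl. field.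
  - change (T s (S M) 0 + b s (S M) * 0 ^ (S M) = 1). rewrite IHM. simpl. ring.
Qed.
Lemma h0 s : h s 0 = 1.
Proof. unfold h. rewrite Rplus_0_r. unfold Rpower. rewrite ln_1, Rmult_0_r. apply exp_0. Qed.
Lemma h_pos s x : 0 < h s x.
Proof. unfold h, Rpower. apply exp_pos. Qed.

Lemma mvt_point s M x : -1/2 <= x -> exists c, -1/2 <= c /\ Rabs c <= Rabs x /\
  h s x - T s (S M) x = - s * (h (s + 1) c - T (s + 1) M c) * x.
Proof.
  intros Hx.
  set (f := fun y => h s y - T s (S M) y).
  set (f' := fun y => - s * (h (s + 1) y - T (s + 1) M y)).
  assert (Hd : forall c, -1 < c -> derivable_pt_lim f c (f' c)).
  { intros c Hc. assert (H := derivable_pt_lim_minus _ _ c _ _ (h_deriv s c Hc) (T_deriv s M c)).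
    unfold f'. replace (- s * (h (s + 1) c - T (s + 1) M c)) with (- s * h (s + 1) c - - s * T (s + 1) M c) by ring.
    exact H. }
  assert (Hf0 : f 0 = 0) by (unfold f; rewrite h0, T0; ring).
  destruct (Rtotal_order x 0) as [Hlt|[Heq|Hgt]].
  - destruct (MVT_cor2 f f' x 0 Hlt) as [c [Hc1 Hc2]].
    { intros c Hc; apply Hd; lra. }
    exists c. split; [lra|]. split; [rewrite !Rabs_left1 by lra; lra|].
    change (f x = f' c * x). rewrite Hf0 in Hc1. lra.
  - subst. exists 0. split; [lra|]. split; [lra|]. change (f 0 = f' 0 * 0). rewrite Hf0; ring.
  - destruct (MVT_cor2 f f' 0 x Hgt) as [c [Hc1 Hc2]].
    { intros c Hc; apply Hd; lra. }
    exists c. split; [lra|]. split; [rewrite !Rabs_right by lra; lra|].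
    change (f x = f' c * x). rewrite Hf0 in Hc1. lra.
Qed.

Lemma taylor M : forall s, 0 < s -> exists K, 0 <= K /\
  forall x, -1/2 <= x -> Rabs (h s x - T s M x) <= K * Rabs x ^ M.
Proof.
  induction M; intros s Hs.
  - exists (Rpower (1/2) (- s)). split; [unfold Rpower; left; apply exp_pos|].
    intros x Hx. simpl. rewrite Rminus_0_r, Rmult_1_r.
    rewrite Rabs_right by (left; apply h_pos). unfold h. rewrite !Rpower_Ropp.
    apply Rinv_le_contravar; [unfold Rpower; apply exp_pos|].
    apply Rle_Rpower_l; lra.
  - destruct (IHM (s + 1) ltac:(lra)) as [K [HK H]].
    exists (s * K). split; [nra|]. intros x Hx.
    destruct (mvt_point s M x Hx) as [c [Hc1 [Hc2 Hc3]]].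
    rewrite Hc3. rewrite !Rabs_mult. rewrite Rabs_Ropp, (Rabs_right s) by lra.
    specialize (H c Hc1).
    assert (Rabs c ^ M <= Rabs x ^ M) by (apply pow_incr; split; [apply Rabs_pos|lra]).
    simpl pow. assert (0 <= Rabs x) by apply Rabs_pos.
    assert (0 <= Rabs (h (s + 1) c - T (s + 1) M c)) by apply Rabs_pos.
    assert (Rabs (h (s + 1) c - T (s + 1) M c) <= K * Rabs x ^ M).
    { eapply Rle_trans; [apply H|]. apply Rmult_le_compat_l; lra. }
    apply Rle_trans with (s * (K * Rabs x ^ M) * Rabs x).
    { apply Rmult_le_compat_r; [lra|]. apply Rmult_le_compat_l; lra. }
    right; ring.
Qed.

Lemma C_SS N i : C (S N) (S i) = INR (S N) / INR (S i) * C N i.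
Proof.
  unfold C. rewrite !fact_simpl, !mult_INR. simpl (S N - S i)%nat.
  assert (INR (S i) <> 0) by (apply not_0_INR; lia).
  assert (INR (S N) <> 0) by (apply not_0_INR; lia).
  assert (H1 := INR_fact_neq_0 i). assert (H2 := INR_fact_neq_0 (N - i)). assert (H3 := INR_fact_neq_0 N).
  field. repeat split; auto.
Qed.

Lemma Rpower_pos x y : 0 < Rpower x y.
Proof. unfold Rpower; apply exp_pos. Qed.

Lemma f_E p r N : f_r p r (S N) = INR (S N) * p * E p N (fun i => / Rpower (INR i + 1) (r + 1)).
Proof.
  unfold f_r. rewrite rsum_shift. unfold E. rewrite <- rsum_scal. apply rsum_ext; intros i Hi.
  rewrite C_SS. unfold w. simpl (S N - S i)%nat. rewrite Rpower_plus, Rpower_1 by (assert (0 <= INR i) by apply pos_INR; lra).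
  rewrite S_INR. assert (0 <= INR i) by apply pos_INR.
  assert (H1 := Rpower_pos (INR i + 1) r).
  assert (0 <= INR N) by apply pos_INR. rewrite (S_INR i).
  simpl pow. field. repeat split; lra.
Qed.

Lemma Rceil_half k : Rceil (INR k / 2) = Z.of_nat ((k + 1) / 2).
Proof.
  unfold Rceil. set (c := ((k + 1) / 2)%nat).
  assert (Hc : INR k / 2 <= INR c < INR k / 2 + 1).
  { unfold c. destruct (Nat.Even_or_Odd k) as [[c' ->]|[c' ->]].
    - rewrite half_double1. rewrite mult_INR. simpl (INR 2). lra.
    - replace (2 * c' + 1 + 1)%nat with (2*(c'+1))%nat by lia. assert (E1 : ((2*(c'+1))/2 = c'+1)%nat) by apply half_double. rewrite E1.
      rewrite plus_INR, mult_INR, plus_INR. simpl (INR 2). simpl (INR 1). lra. }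
  assert (Hu : up (- (INR k / 2)) = (1 - Z.of_nat c)%Z).
  { symmetry. apply tech_up; rewrite minus_IZR, <- INR_IZR_INZ; simpl (IZR 1); lra. }
  rewrite Hu. lia.
Qed.

Lemma powerRZ_negnat x c : powerRZ x (- Z.of_nat c) = / x ^ c.
Proof. rewrite powerRZ_neg', <- pow_powerRZ. reflexivity. Qed.

Fixpoint Tb (s : R) (M : nat) : R := match M with O => 0 | S M => Tb s M + Rabs (b s M) end.

Lemma Tb_bound s M x : Rabs x <= 1 -> Rabs (T s M x) <= Tb s M.
Proof.
  intros Hx. induction M; simpl.
  - rewrite Rabs_R0; lra.
  - eapply Rle_trans; [apply Rabs_triang|]. apply Rplus_le_compat; [exact IHM|].
    rewrite Rabs_mult. assert (H := pow_le1 x M Hx). assert (0 <= Rabs (b s M)) by apply Rabs_pos.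
    assert (0 <= Rabs (x ^ M)) by apply Rabs_pos. nra.
Qed.
Lemma Tb_nonneg s M : 0 <= Tb s M.
Proof. induction M; simpl; [lra|]. assert (0 <= Rabs (b s M)) by apply Rabs_pos. lra. Qed.

Lemma even_pow_nonneg x c : 0 <= x ^ (2 * c).
Proof. rewrite pow_mult. apply pow_le. nra. Qed.

Lemma pointwise s c L : 0 < s -> exists K K', 0 <= K /\ 0 <= K' /\ forall x, -1 < x ->
  Rabs (h s x - T s (2 * c) x) <= K * x ^ (2 * c) + (h s x + K') * (4 ^ L * x ^ (2 * L)).
Proof.
  intros Hs. destruct (taylor (2 * c) s Hs) as [K [HK HT]].
  exists K, (Tb s (2 * c)). split; [exact HK|]. split; [apply Tb_nonneg|].
  intros x Hx.
  assert (H4 : 0 <= 4 ^ L * x ^ (2 * L)) by (apply Rmult_le_pos; [apply pow_le; lra|apply even_pow_nonneg]).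
  assert (Hh := h_pos s x). assert (HTb := Tb_nonneg s (2 * c)).
  assert (HxM := even_pow_nonneg x c).
  destruct (Rle_or_lt (-1/2) x) as [Hx2|Hx2].
  - eapply Rle_trans; [apply HT; exact Hx2|].
    rewrite RPow_abs, Rabs_right by (apply Rle_ge, even_pow_nonneg).
    assert (0 <= (h s x + Tb s (2 * c)) * (4 ^ L * x ^ (2 * L))) by (apply Rmult_le_pos; lra).
    lra.
  - assert (H1 : 1 <= 4 ^ L * x ^ (2 * L)).
    { rewrite pow_mult, <- Rpow_mult_distr. apply pow_R1_Rle. simpl. nra. }
    eapply Rle_trans; [apply Rabs_triang|]. rewrite Rabs_Ropp, Rabs_right by lra.
    assert (Rabs (T s (2 * c) x) <= Tb s (2 * c)) by (apply Tb_bound; apply Rabs_le; lra).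
    assert (0 <= K * x ^ (2 * c)) by (apply Rmult_le_pos; lra).
    assert (h s x + Tb s (2*c) <= (h s x + Tb s (2 * c)) * (4 ^ L * x ^ (2 * L))).
    { rewrite <- (Rmult_1_r (h s x + Tb s (2*c))) at 1. apply Rmult_le_compat_l; lra. }
    lra.
Qed.

Lemma P_fold r a0 k : fold_right Rmult 1 (map (fun j => r + INR j) (seq (S a0) k)) = P (r + 1 + INR a0) k.
Proof.
  revert a0; induction k; intros a0; [reflexivity|].
  change (fold_right Rmult 1 (map (fun j => r + INR j) (seq (S a0) (S k)))) with
    ((r + INR (S a0)) * fold_right Rmult 1 (map (fun j => r + INR j) (seq (S (S a0)) k))).
  rewrite IHk. change (P (r+1+INR a0) (S k)) with ((r+1+INR a0) * P (r+1+INR a0+1) k).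
  rewrite !S_INR. f_equal; [ring|]. f_equal. ring.
Qed.

Lemma b_gbinom r k : b (r + 1) k = (-1) ^ k * gbinom r k.
Proof.
  unfold b, gbinom. rewrite P_fold. simpl INR. rewrite Rplus_0_r. unfold Rdiv. ring.
Qed.

Section M.
Variable p : R.
Hypothesis hp0 : 0 < p.
Hypothesis hp1 : p < 1.

Definition aa (N : nat) := INR N * p + 1.
Definition xx (N i : nat) := (INR i - INR N * p) / aa N.

Lemma aa_pos N : 0 < aa N.
Proof. unfold aa. assert (0 <= INR N) by apply pos_INR. nra. Qed.

Lemma Ex_pow N j : E p N (fun i => xx N i ^ j) = mu p j N / aa N ^ j.
Proof.
  assert (Ha := aa_pos N).
  rewrite (E_ext p N _ (fun i => / aa N ^ j * (INR i - INR N * p) ^ j)).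
  - rewrite E_scal, <- mu_E. unfold Rdiv; ring.
  - intros i. unfold xx, Rdiv. rewrite Rpow_mult_distr, pow_inv. ring.
Qed.

Lemma E_T s N m : E p N (fun i => T s m (xx N i)) = rsum 0 m (fun k => b s k * (mu p k N / aa N ^ k)).
Proof.
  induction m.
  - unfold E. simpl. rewrite (rsum_ext 0 (S N) _ (fun _ => 0 * 0)) by (intros; ring).
    rewrite rsum_scal. unfold rsum; simpl; ring.
  - rewrite rsum_last. simpl T. rewrite E_plus, E_scal, IHm, Ex_pow. reflexivity.
Qed.

Lemma xx_gt N i : -1 < xx N i.
Proof.
  assert (Ha := aa_pos N). unfold xx. assert (0 <= INR i) by apply pos_INR.
  apply Rmult_lt_reg_r with (aa N); auto. unfold Rdiv. rewrite Rmult_assoc, Rinv_l by lra.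
  unfold aa in *. lra.
Qed.

Lemma h_xx s N i : h s (xx N i) = Rpower (aa N) s * / Rpower (INR i + 1) s.
Proof.
  assert (Ha := aa_pos N). assert (0 <= INR i) by apply pos_INR.
  unfold h. replace (1 + xx N i) with ((INR i + 1) * / aa N).
  2:{ unfold xx, aa in *. field. lra. }
  rewrite Rpower_Ropp, <- Rpower_mult_distr by (try apply Rinv_0_lt_compat; lra).
  assert (Rpower (/ aa N) s = / Rpower (aa N) s).
  { unfold Rpower. rewrite ln_Rinv by lra. rewrite <- exp_Ropp. f_equal. ring. }
  rewrite H0. assert (H1 := Rpower_pos (INR i + 1) s). assert (H2 := Rpower_pos (aa N) s).
  field. split; lra.
Qed.
End M.

Section Main.
Variables p r : R.
Hypothesis hp0 : 0 < p.
Hypothesis hp1 : p < 1.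
Hypothesis hr : 0 < r.

Lemma E_minus N F G : E p N (fun i => F i - G i) = E p N F - E p N G.
Proof.
  rewrite (E_ext p N _ (fun i => F i + (-1) * G i)) by (intros; ring).
  rewrite E_plus, E_scal. ring.
Qed.

Lemma part1 m : (1 <= m)%nat ->
     exists (Cst : R) (N0 : nat), forall n : nat, (N0 <= n)%nat ->
       exists e : R,
         Rabs e <= Cst * powerRZ (INR n) (- Rceil (INR m / 2)) /\
         f_r p r n =
           INR n * p / Rpower (INR n * p + (1 - p)) (r + 1) *
           (rsum 0 m (fun k => (-1) ^ k * (mu p k (n - 1) / (INR n * p + (1 - p)) ^ k)
                                 * gbinom r k) + e).
Proof.
  intros Hm.
  set (s := r + 1). assert (Hs : 0 < s) by (unfold s; lra).
  set (c := ((m + 1) / 2)%nat).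
  assert (HM : (2 * c = m \/ 2 * c = S m)%nat).
  { unfold c. destruct (Nat.Even_or_Odd m) as [[c' ->]|[c' ->]].
    - left. rewrite half_double1. reflexivity.
    - right. replace (2 * c' + 1 + 1)%nat with (2 * (c' + 1))%nat by lia.
      assert (E1 : ((2*(c'+1))/2 = c'+1)%nat) by apply half_double. rewrite E1. lia. }
  destruct (INR_archimed 1 s ltac:(lra)) as [z Hz]. rewrite Rmult_1_r in Hz.
  set (L := (c + z)%nat).
  destruct (pointwise s c L Hs) as [K [K' [HK [HK' Hpw]]]].
  destruct (mu_ratio p hp0 hp1 m) as [Cm [HCm Hmr]].
  destruct (mu_ratio p hp0 hp1 (2 * c)) as [CM [HCM HMr]].
  destruct (mu_ratio p hp0 hp1 (2 * L)) as [CL [HCL HLr]].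
  exists (Rabs (b s m) * Cm + K * CM + (1 + K') * 4 ^ L * CL), 1%nat.
  intros n Hn. destruct n as [|N]; [lia|].
  set (nn := INR (S N)).
  assert (Hnn : 1 <= nn) by (unfold nn; rewrite S_INR; assert (0 <= INR N) by apply pos_INR; lra).
  rewrite Rceil_half, powerRZ_negnat. fold c. fold nn.
  replace (S N - 1)%nat with N by lia.
  replace (nn * p + (1 - p)) with (aa p N) by (unfold aa, nn; rewrite S_INR; ring).
  assert (Ha := aa_pos p hp0 hp1 N).
  set (Sm := rsum 0 m _).
  assert (HS : Sm = E p N (fun i => T s m (xx p N i))).
  { rewrite E_T by auto. apply rsum_ext; intros k _. unfold s. rewrite b_gbinom. ring. }
  set (H := Rpower (aa p N) s).
  assert (HHpos : 0 < H) by apply Rpower_pos.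
  assert (Hf : f_r p r (S N) = nn * p / H * E p N (fun i => h s (xx p N i))).
  { rewrite f_E. rewrite (E_ext p N (fun i => h s (xx p N i)) (fun i => H * / Rpower (INR i + 1) s)) by (intros; apply h_xx; auto).
    rewrite E_scal. fold nn. unfold s. field. lra. }
  exists (E p N (fun i => h s (xx p N i)) - Sm). split.
  2:{ rewrite Hf. fold s. fold H. ring. }
  assert (Hnc : 0 < nn ^ c) by (apply pow_lt; lra).
  assert (Hnz : 1 <= nn ^ z) by (apply pow_R1_Rle; lra).
  set (Q := / nn ^ c). assert (HQ : 0 < Q) by (apply Rinv_0_lt_compat; lra).
  rewrite HS.
  replace (E p N (fun i => h s (xx p N i)) - E p N (fun i => T s m (xx p N i))) with
    (E p N (fun i => h s (xx p N i) - T s (2 * c) (xx p N i)) +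
     (E p N (fun i => T s (2 * c) (xx p N i)) - E p N (fun i => T s m (xx p N i)))) by (rewrite E_minus; ring).
  assert (B1 : Rabs (E p N (fun i => T s (2 * c) (xx p N i)) - E p N (fun i => T s m (xx p N i)))
               <= Rabs (b s m) * Cm * Q).
  { rewrite !E_T by auto. assert (0 <= Rabs (b s m) * Cm * Q) by (apply Rmult_le_pos; [apply Rmult_le_pos; [apply Rabs_pos|lra]|lra]).
    destruct HM as [HM|HM]; rewrite HM.
    - rewrite Rminus_diag, Rabs_R0. lra.
    - rewrite rsum_last. simpl (0 + m)%nat.
      replace (rsum 0 m (fun k : nat => b s k * (mu p k N / aa p N ^ k)) + b s m * (mu p m N / aa p N ^ m) -
               rsum 0 m (fun k : nat => b s k * (mu p k N / aa p N ^ k))) with (b s m * (mu p m N / aa p N ^ m)) by ring.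
      rewrite Rabs_mult, Rmult_assoc. apply Rmult_le_compat_l; [apply Rabs_pos|].
      specialize (Hmr N). fold nn in Hmr. fold c in Hmr. exact Hmr. }
  assert (HhH : forall i, h s (xx p N i) <= H).
  { intros i. rewrite h_xx by auto. fold H.
    assert (0 <= INR i) by apply pos_INR.
    assert (1 <= Rpower (INR i + 1) s).
    { replace 1 with (Rpower 1 s) at 1 by (unfold Rpower; rewrite ln_1, Rmult_0_r; apply exp_0).
      apply Rle_Rpower_l; lra. }
    rewrite <- (Rmult_1_r H) at 2. apply Rmult_le_compat_l; [lra|].
    apply (Rmult_le_reg_r (Rpower (INR i+1) s)); [lra|]. rewrite Rinv_l by lra. lra. }
  assert (B2a : Rabs (E p N (fun i => h s (xx p N i) - T s (2 * c) (xx p N i))) <=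
     K * (mu p (2 * c) N / aa p N ^ (2 * c)) + (H + K') * 4 ^ L * (mu p (2 * L) N / aa p N ^ (2 * L))).
  { eapply Rle_trans; [apply E_abs; auto|].
    eapply Rle_trans.
    - apply E_le; auto. intros i. eapply Rle_trans; [apply Hpw, xx_gt; auto|].
      apply Rplus_le_compat_l. apply Rmult_le_compat_r.
      + apply Rmult_le_pos; [apply pow_le; lra|apply even_pow_nonneg].
      + apply Rplus_le_compat_r, HhH.
    - right. rewrite E_plus, E_scal.
      rewrite (E_ext p N (fun i => (H + K') * (4 ^ L * xx p N i ^ (2 * L))) (fun i => ((H + K') * 4 ^ L) * xx p N i ^ (2 * L))) by (intros; ring).
      rewrite E_scal, !Ex_pow by auto. ring. }
  assert (BM : mu p (2 * c) N / aa p N ^ (2 * c) <= CM * Q).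
  { eapply Rle_trans; [apply Rle_abs|]. eapply Rle_trans; [apply HMr|].
    assert (E1 : ((2 * c + 1) / 2 = c)%nat) by apply half_double1. rewrite E1. fold nn. right; reflexivity. }
  assert (BL : mu p (2 * L) N / aa p N ^ (2 * L) <= CL * Q * / nn ^ z).
  { eapply Rle_trans; [apply Rle_abs|]. eapply Rle_trans; [apply HLr|].
    assert (E1 : ((2 * L + 1) / 2 = L)%nat) by apply half_double1. rewrite E1. fold nn.
    unfold L. rewrite pow_add. unfold Q. right. field. lra. }
  assert (HHn : H <= nn ^ z).
  { unfold H. rewrite <- Rpower_pow by lra.
    apply Rle_trans with (Rpower nn s).
    - apply Rle_Rpower_l; [lra|]. split; [lra|]. unfold aa, nn. rewrite S_INR.
      assert (0 <= INR N) by apply pos_INR. nra.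
    - apply Rle_Rpower; lra. }
  assert (HK2 : (H + K') * / nn ^ z <= 1 + K').
  { assert (0 < / nn ^ z) by (apply Rinv_0_lt_compat; lra).
    assert (/ nn ^ z <= 1) by (rewrite <- Rinv_1; apply Rinv_le_contravar; lra).
    assert (H * / nn ^ z <= 1).
    { apply Rmult_le_reg_r with (nn ^ z); [lra|]. rewrite Rmult_assoc, Rinv_l by lra. lra. }
    assert (K' * / nn ^ z <= K') by (rewrite <- (Rmult_1_r K') at 2; apply Rmult_le_compat_l; lra).
    lra. }
  assert (H4L : 0 <= 4 ^ L) by (apply pow_le; lra).
  assert (B2 : Rabs (E p N (fun i => h s (xx p N i) - T s (2 * c) (xx p N i))) <= K * CM * Q + (1 + K') * 4 ^ L * CL * Q).
  { eapply Rle_trans; [apply B2a|]. apply Rplus_le_compat.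
    - rewrite Rmult_assoc. apply Rmult_le_compat_l; lra.
    - apply Rle_trans with ((H + K') * 4 ^ L * (CL * Q * / nn ^ z)).
      + apply Rmult_le_compat_l; [apply Rmult_le_pos; lra|lra].
      + replace ((H + K') * 4 ^ L * (CL * Q * / nn ^ z)) with (((H + K') * / nn ^ z) * (4 ^ L * CL * Q)) by ring.
        replace ((1 + K') * 4 ^ L * CL * Q) with ((1 + K') * (4 ^ L * CL * Q)) by ring.
        apply Rmult_le_compat_r; [|lra]. apply Rmult_le_pos; [apply Rmult_le_pos|]; lra. }
  eapply Rle_trans; [apply Rabs_triang|]. fold Q. lra.
Qed.

Lemma part2 k : exists (Cst : R) (N0 : nat), forall n : nat, (N0 <= n)%nat ->
       Rabs (mu p k (n - 1) / (INR n * p + (1 - p)) ^ k)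
         <= Cst * powerRZ (INR n) (- Rceil (INR k / 2)).
Proof.
  destruct (mu_ratio p hp0 hp1 k) as [Cst [HC H]].
  exists Cst, 1%nat. intros n Hn. destruct n as [|N]; [lia|].
  rewrite Rceil_half, powerRZ_negnat.
  replace (S N - 1)%nat with N by lia.
  replace (INR (S N) * p + (1 - p)) with (INR N * p + 1) by (rewrite S_INR; ring).
  apply H.
Qed.
End Main.

Theorem theorem1 (p r : R) (hp0 : 0 < p) (hp1 : p < 1) (hr : 0 < r) :
  (forall m : nat, (1 <= m)%nat ->
     exists (Cst : R) (N0 : nat), forall n : nat, (N0 <= n)%nat ->
       exists e : R,
         Rabs e <= Cst * powerRZ (INR n) (- Rceil (INR m / 2)) /\
         f_r p r n =
           INR n * p / Rpower (INR n * p + (1 - p)) (r + 1) *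
           (rsum 0 m (fun k => (-1) ^ k * (mu p k (n - 1) / (INR n * p + (1 - p)) ^ k)
                                 * gbinom r k) + e))
  /\
  (forall k : nat,
     exists (Cst : R) (N0 : nat), forall n : nat, (N0 <= n)%nat ->
       Rabs (mu p k (n - 1) / (INR n * p + (1 - p)) ^ k)
         <= Cst * powerRZ (INR n) (- Rceil (INR k / 2))).
Proof.
  split.
  - intros m Hm. exact (part1 p r hp0 hp1 hr m Hm).
  - intros k. exact (part2 p hp0 hp1 k).
Qed.
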